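(* Let $A$ be an $m$-dimensional binary array of size $n_1\times\cdots\times n_m$ and $\mathbb{A}$ its periodic extension to $\mathbb{Z}^m$. If some toroidal vector $\langle h_1,\dots,h_m\rangle$ occurs at least twice in $\mathcal{T}_A$ and $h_i\neq n_i/2$ for every $i\in[m]$ (i.e. it is not in $\mathcal{H}_A$), then there is an $n_1\times\cdots\times n_m$ window of $\mathbb{A}$ having a repeated difference vector (i.e. two distinct ordered pairs of distinct dots in the window with the same difference vector).
   Context: For $n\in\mathbb{N}$, $[n]=\{1,\dots,n\}$. An $m$-dimensional binary array of size $n_1\times\cdots\times n_m$ ($m\ge2$, all $n_i\ge 2$) is a function $A:\Lambda\to\{0,1\}$ with $\Lambda=[n_1]\times\cdots\times[n_m]$; a dot is a point where $A$ equals 1. The periodic extension $\mathbb{A}:\mathbb{Z}^m\to\{0,1\}$ is $\mathbb{A}(a_1,\dots,a_m)=A(a_1',\dots,a_m')$ where $a_i'\in[n_i]$, $a_i'\equiv a_i\pmod{n_i}$. An $n_1\times\cdots\times n_m$ window of $\mathbb{A}$ is the restriction of $\mathbb{A}$ to a box $\prod_i\{k_i,\dots,k_i+n_i-1\}$, $k_i\in\mathbb{Z}$. The difference vector from a dot $\alpha=(a_1,\dots,a_m)$ to a distinct dot $\omega=(w_1,\dots,w_m)$ is $\langle w_1-a_1,\dots,w_m-a_m\rangle\in\mathbb{Z}^m$; the toroidal vector is $\langle (w_1-a_1)\bmod n_1,\dots,(w_m-a_m)\bmod n_m\rangle\in\mathbb{Z}_{n_1}\times\cdots\times\mathbb{Z}_{n_m}$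 (components taken in $\{0,\dots,n_i-1\}$). $\mathcal{T}_A$ is the multiset of toroidal vectors over all ordered pairs of distinct dots of $A$, and $\mathcal{H}_A$ is the sub-multiset of those $\langle h_1,\dots,h_m\rangle$ with $h_i=n_i/2$ for some $i\in[m]$. *)

(* Defs.v *)
From mathcomp Require Import all_boot all_algebra.
Set Implicit Arguments. Unset Strict Implicit. Unset Printing Implicit Defensive.
Import GRing.Theory Num.Theory.
Local Open Scope ring_scope.

(* Points of Z^m are finite functions 'I_m -> int (coordinates a_1..a_m,
   index i : 'I_m standing for coordinate i+1). *)
Definition point (m : nat) := {ffun 'I_m -> int}.

Definition inLambda (m : nat) (n : 'I_m -> nat) (p : point m) : Prop :=
  forall i, 1 <= p i <= (n i)%:Z.

Definition red (k : nat) (a : int) : int := ((a - 1) %% k%:Z)%Z + 1.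

(* An m-dimensional binary array is A : Lambda -> {0,1}; we represent it by a
   function on all of Z^m of which only the values on Lambda are ever used. *)
Definition perext (m : nat) (n : 'I_m -> nat) (A : point m -> bool)
  (x : point m) : bool :=
  A [ffun i => red (n i) (x i)].

Definition dot (m : nat) (n : 'I_m -> nat) (A : point m -> bool) (p : point m)
  : Prop := inLambda n p /\ A p.

Definition torvec (m : nat) (n : 'I_m -> nat) (alpha omega : point m)
  : point m := [ffun i => ((omega i - alpha i) %% (n i)%:Z)%Z].

Definition diffvec (m : nat) (alpha omega : point m) : point m :=
  [ffun i => omega i - alpha i].

Definition inWindow (m : nat) (n : 'I_m -> nat) (k : point m) (p : point m)
  : Prop := forall i, k i <= p i <= k i + (n i)%:Z - 1.

Definition occurs_twice_in_T (m : nat) (n : 'I_m -> nat) (A : point m -> bool)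
  (h : point m) : Prop :=
  exists a1 w1 a2 w2 : point m,
    [/\ dot n A a1, dot n A w1, dot n A a2 & dot n A w2] /\
    a1 != w1 /\ a2 != w2 /\ (a1, w1) != (a2, w2) /\
    torvec n a1 w1 = h /\ torvec n a2 w2 = h.

Definition window_has_repeated_diff (m : nat) (n : 'I_m -> nat)
  (A : point m -> bool) (k : point m) : Prop :=
  exists a1 w1 a2 w2 : point m,
    [/\ inWindow n k a1, inWindow n k w1, inWindow n k a2 & inWindow n k w2] /\
    [/\ perext n A a1, perext n A w1, perext n A a2 & perext n A w2] /\
    a1 != w1 /\ a2 != w2 /\ (a1, w1) != (a2, w2) /\
    diffvec a1 w1 = diffvec a2 w2.

(* Main.v *)
Require Import Defs.
From mathcomp Require Import all_boot all_algebra.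
From mathcomp Require Import zify.
Local Open Scope ring_scope.
Import GRing.Theory Num.Theory.

Lemma red_eq (k : nat) (p w q : int) : (0 < k)%N -> 1 <= w <= k%:Z ->
  p = w + q * k%:Z -> red k p = w.
Proof.
move=> k0 /andP[w1 wk] ->; rewrite /red.
have -> : w + q * k%:Z - 1 = q * k%:Z + (w - 1) by lia.
rewrite modzMDl modz_small; first lia.
apply/andP; split; lia.
Qed.

Theorem mainTheorem2 (m : nat) (n : 'I_m -> nat) (A : point m -> bool)
  (h : point m) :
  (2 <= m)%N ->
  (forall i, (2 <= n i)%N) ->
  occurs_twice_in_T n A h ->
  (forall i, 2 * h i != (n i)%:Z) ->
  exists k : point m, window_has_repeated_diff n A k.
Proof.
move=> _ n2 [a1 [w1 [a2 [w2 [[D1 D2 D3 D4] [ne1 [ne2 [ne12 [T1 T2]]]]]]]]] h2.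
pose c i := ((n i %/ 2)%N)%:Z.
pose d i := if 2 * h i < (n i)%:Z then h i else h i - (n i)%:Z.
pose y i := a1 i + ((a2 i - a1 i + c i) %% (n i)%:Z)%Z - c i.
pose Q1 := [ffun i => a1 i + d i].
pose P2 := [ffun i => y i]. pose Q2 := [ffun i => y i + d i].
pose k := [ffun i => (if a1 i <= y i then a1 i else y i) + (if d i < 0 then d i else 0)].
have key : forall i, [/\ red (n i) (a1 i) = a1 i, red (n i) (a1 i + d i) = w1 i,
   red (n i) (y i) = a2 i, red (n i) (y i + d i) = w2 i &
   [/\ k i <= a1 i <= k i + (n i)%:Z - 1, k i <= a1 i + d i <= k i + (n i)%:Z - 1,
       k i <= y i <= k i + (n i)%:Z - 1 & k i <= y i + d i <= k i + (n i)%:Z - 1]].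
  move=> i.
  have n0 : (0 < n i)%N by have := n2 i; lia.
  have nZ : 2 <= (n i)%:Z by have := n2 i; lia.
  have nZ0 : (n i)%:Z != 0 by lia.
  case: D1 => /(_ i) /andP[a1l a1u] _.
  case: D2 => /(_ i) /andP[w1l w1u] _.
  case: D3 => /(_ i) /andP[a2l a2u] _.
  case: D4 => /(_ i) /andP[w2l w2u] _.
  have hi : h i = ((w1 i - a1 i) %% (n i)%:Z)%Z.
    by have := congr1 (fun f : point m => f i) T1; rewrite /torvec ffunE.
  have hi' : h i = ((w2 i - a2 i) %% (n i)%:Z)%Z.
    by have := congr1 (fun f : point m => f i) T2; rewrite /torvec ffunE.
  have e1 := divz_eq (w1 i - a1 i) (n i)%:Z.
  have e3 := divz_eq (w2 i - a2 i) (n i)%:Z.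
  rewrite -hi in e1; rewrite -hi' in e3.
  set q1 := ((w1 i - a1 i) %/ _)%Z in e1.
  set q3 := ((w2 i - a2 i) %/ _)%Z in e3.
  have hl : 0 <= h i by rewrite hi modz_ge0.
  have hu : h i < (n i)%:Z by rewrite hi ltz_pmod //; lia.
  have cb : 2 * c i <= (n i)%:Z <= 2 * c i + 1.
    rewrite /c; apply/andP; split; lia.
  have e2 := divz_eq (a2 i - a1 i + c i) (n i)%:Z.
  set r := ((a2 i - a1 i + c i) %% _)%Z in e2.
  set q2 := ((a2 i - a1 i + c i) %/ _)%Z in e2.
  have rl : 0 <= r by rewrite /r modz_ge0.
  have ru : r < (n i)%:Z by rewrite /r ltz_pmod //; lia.
  have ey : y i = a1 i + r - c i by [].
  have hd : (2 * h i < (n i)%:Z /\ d i = h i) \/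
            ((n i)%:Z < 2 * h i /\ d i = h i - (n i)%:Z).
    rewrite /d; case: ifP => H; [left | right]; split => //.
    have := h2 i; move: H; lia.
  have kk : k i = (if a1 i <= y i then a1 i else y i) + (if d i < 0 then d i else 0)
    by rewrite /k ffunE.
  move: (y i) ey kk => yi ey kk.
  move: (d i) hd kk => di hd kk.
  move: (k i) kk => ki kk.
  split.
  - by apply: (@red_eq _ _ _ (0)) => //; [apply/andP; split | lia].
  - case: hd => [[_ ->]|[_ ->]].
    + by apply: (@red_eq _ _ _ (- q1)) => //; [apply/andP; split | lia].
    + by apply: (@red_eq _ _ _ (- q1 - 1)) => //; [apply/andP; split | lia].
  - by apply: (@red_eq _ _ _ (- q2)) => //; [apply/andP; split | lia].
  - case: hd => [[_ ->]|[_ ->]].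
    + by apply: (@red_eq _ _ _ (- q2 - q3)) => //; [apply/andP; split | lia].
    + by apply: (@red_eq _ _ _ (- q2 - q3 - 1)) => //; [apply/andP; split | lia].
  - move: kk; case: ifP => H1; case: ifP => H2 kk;
      split; apply/andP; split; move: H1 H2; lia.
have kP : forall i, red (n i) (a1 i) = red (n i) (y i) -> a1 i = a2 i.
  by move=> i; case: (key i) => -> _ -> _ _.
exists k, a1, Q1, P2, Q2; split.
  split => i; case: (key i) => _ _ _ _ [H1 H2 H3 H4].
  - exact: H1.
  - by rewrite [Q1 i]ffunE.
  - by rewrite [P2 i]ffunE.
  - by rewrite [Q2 i]ffunE.
split.
  split; rewrite /perext.
  - suff -> : [ffun i => red (n i) (a1 i)] = a1 by case: D1.
    by apply/ffunP => i; rewrite !ffunE; case: (key i).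
  - suff -> : [ffun i => red (n i) (Q1 i)] = w1 by case: D2.
    by apply/ffunP => i; rewrite !ffunE; case: (key i).
  - suff -> : [ffun i => red (n i) (P2 i)] = a2 by case: D3.
    by apply/ffunP => i; rewrite !ffunE; case: (key i).
  - suff -> : [ffun i => red (n i) (Q2 i)] = w2 by case: D4.
    by apply/ffunP => i; rewrite !ffunE; case: (key i).
split.
  apply/eqP => E; move/eqP: ne1; apply; apply/ffunP => i.
  case: (key i) => R1 R2 _ _ _; rewrite -R2 -{1}R1; congr red.
  by have := congr1 (fun f : point m => f i) E; rewrite ffunE.
split.
  apply/eqP => E; move/eqP: ne2; apply; apply/ffunP => i.
  case: (key i) => _ _ R3 R4 _; rewrite -R3 -R4; congr red.
  by have := congr1 (fun f : point m => f i) E; rewrite !ffunE.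
split.
  apply/eqP => E; move/eqP: ne12; apply; have E1 := congr1 fst E; have E2 := congr1 snd E; rewrite /= in E1 E2.
  have E1' : forall i, a1 i = y i by move=> i; have := congr1 (fun f : point m => f i) E1; rewrite ffunE.
  congr pair; apply/ffunP => i; case: (key i) => R1 R2 R3 R4 _.
  - by rewrite -R3 -E1' R1.
  - by rewrite -R2 -R4 -E1'.
apply/ffunP => i; rewrite /diffvec !ffunE.
by rewrite addrAC subrr add0r [_ + d i]addrC addrK.
Qed.
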